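(* If $g_N\in H_N^{\mathrm{rw}}$ converges weakly to $g\in H^{\mathrm{bm}}$ with respect to the Hilbert space convergence $H_N^{\mathrm{rw}}\to H^{\mathrm{bm}}$, then $\lim_{N\to\infty}\frac1N g_N(0)=0$.
   Context: $H_N^{\mathrm{rw}}=L^2(\frac1N\mathbb Z,\mu_N)$ where $\mu_N$ gives mass $\frac1N$ to each point; $H^{\mathrm{bm}}=L^2(\mathbb R,dx)$. Hilbert convergence is witnessed by $C=C_c^\infty(\mathbb R)$ and $\Phi_Nf=f|_{\frac1N\mathbb Z}$. Strong convergence $h_N\to h$: there exist $\tilde h_M\in C$ with $\|\tilde h_M-h\|_{H^{\mathrm{bm}}}\to0$ and $\lim_M\limsup_N\|\Phi_N\tilde h_M-h_N\|_{H_N^{\mathrm{rw}}}=0$. Weak convergence $g_N\to g$: $\langle g_N,h_N\rangle_{H_N^{\mathrm{rw}}}\to\langle g,h\rangle_{H^{\mathrm{bm}}}$ for every strongly convergent $h_N\to h$. *)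

(* Defs.v *)
From HB Require Import structures.
From mathcomp Require Import all_boot all_order all_algebra.
From mathcomp Require Import all_classical all_reals all_analysis.
Set Implicit Arguments. Unset Strict Implicit. Unset Printing Implicit Defensive.
Import Order.TTheory GRing.Theory Num.Theory.
Import numFieldNormedType.Exports.
Local Open Scope classical_set_scope.
Local Open Scope ring_scope.

Section Defs.
Variable R : realType.

Definition smooth (f : R -> R) : Prop :=
  forall (n : nat) (x : R), derivable (derive1n n f) x 1.
Definition compact_support (f : R -> R) : Prop :=
  exists B : R, forall x : R, B < `|x| -> f x = 0.
Definition test_fun (f : R -> R) : Prop := smooth f /\ compact_support f.

(** H_N^rw = L^2((1/N)Z, mu_N): a function g : int -> R, g k being the value
    at the point k/N; mu_N gives mass 1/N to each point. *)
Definition rw_normsq (N : nat) (g : int -> R) : \bar R :=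
  \esum_(k in [set: int]) ((N%:R)^-1 * (g k) ^+ 2)%:E.
Definition in_rw (N : nat) (g : int -> R) : Prop := (rw_normsq N g < +oo)%E.
Definition rw_norm (N : nat) (g : int -> R) : R := Num.sqrt (fine (rw_normsq N g)).
(* inner product: sum over Z (absolutely convergent for g, h in L^2),
   computed as the limit of the symmetric partial sums *)
Definition rw_inner (N : nat) (g h : int -> R) : R :=
  limn (fun n : nat => \sum_(i < (2 * n).+1)
          (N%:R)^-1 * g (i%:Z - n%:Z) * h (i%:Z - n%:Z)).

Definition bm_normsq (f : R -> R) : \bar R :=
  (\int[@lebesgue_measure R]_x ((f x) ^+ 2)%:E)%E.
Definition in_bm (f : R -> R) : Prop :=
  measurable_fun [set: R] f /\ (bm_normsq f < +oo)%E.
Definition bm_norm (f : R -> R) : R := Num.sqrt (fine (bm_normsq f)).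
Definition bm_inner (f g : R -> R) : R :=
  fine (\int[@lebesgue_measure R]_x (f x * g x)%:E)%E.

Definition Phi (N : nat) (f : R -> R) : int -> R :=
  fun k => f (k%:~R / N%:R).

Definition strong_conv (hN : nat -> int -> R) (h : R -> R) : Prop :=
  exists ht : nat -> R -> R,
    (forall M, test_fun (ht M)) /\
    (fun M => bm_norm (ht M \- h)) @ \oo --> 0 /\
    (fun M => limn_esup (fun N => (rw_norm N (Phi N (ht M) \- hN N))%:E))
      @ \oo --> 0%E.

Definition weak_conv (gN : nat -> int -> R) (g : R -> R) : Prop :=
  forall (hN : nat -> int -> R) (h : R -> R),
    (forall N, in_rw N (hN N)) -> in_bm h -> strong_conv hN h ->
    (fun N => rw_inner N (gN N) (hN N)) @ \oo --> bm_inner g h.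

End Defs.

(* Main.v *)
Require Import Defs.
From HB Require Import structures.
From mathcomp Require Import all_boot all_order all_algebra.
From mathcomp Require Import all_classical all_reals all_analysis.
Import Order.TTheory GRing.Theory Num.Theory.
Import numFieldNormedType.Exports.
Local Open Scope classical_set_scope.
Local Open Scope ring_scope.

Section H.
Variable R : realType.
Definition delta0 : int -> R := fun k => if k == 0 then 1 else 0.

Lemma rw_normsq_delta N :
  rw_normsq N (fun k => delta0 k) = ((N%:R)^-1 : R)%:E.
Proof.
rewrite /rw_normsq.
rewrite (_ : ((N%:R)^-1)%:E = \esum_(i in [set (0:int)]) ((N%:R)^-1 * delta0 i ^+ 2)%:E); last first.
  by rewrite esum_set1 /delta0 eqxx ?expr1n ?mulr1 // lee_fin invr_ge0.
rewrite [RHS]esum_mkcond; apply: eq_esum => i _.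
rewrite /delta0 in_set1; case: eqP => //= _.
by rewrite expr0n mulr0.
Qed.

Lemma smooth0 : test_fun (fun _ : R => 0).
Proof.
split; last by exists 0.
move=> n x.
have -> : @derive1n R R^o n (fun _ : R => 0) = (fun _ => 0).
  elim: n => // n IH; rewrite derive1nS IH; apply/funext => y; exact: derive1_cst.
exact: derivable_cst.
Qed.

End H.

Theorem proposition5p10 (R : realType) (gN : nat -> int -> R) (g : R -> R)
  (hgN : forall N : nat, in_rw N (gN N)) (hg : in_bm g)
  (hweak : weak_conv gN g) :
  (fun N : nat => (N%:R)^-1 * gN N 0) @ \oo --> 0.
Proof.
have hbm0 : bm_normsq (fun _ : R => 0) = 0%E.
  rewrite /bm_normsq (_ : (fun x => _) = cst 0%E); first exact: integral0.
  by apply/funext => x /=; rewrite expr0n.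
have key := hweak (fun _ => @delta0 R) (fun _ => 0) _ _ _.
have e1 : (fun N => rw_inner N (gN N) (@delta0 R)) = (fun N : nat => (N%:R)^-1 * gN N 0).
  apply/funext => N; rewrite /rw_inner.
  rewrite (_ : (fun n : nat => _) = (fun _ => (N%:R)^-1 * gN N 0)); first by rewrite lim_cst.
  apply/funext => n.
  have hn : (n < (2 * n).+1)%N by rewrite ltnS mul2n -addnn leq_addr.
  rewrite (bigD1 (Ordinal hn)) //= subrr /delta0 eqxx mulr1 big1 ?addr0 //.
  move=> i /eqP hi; rewrite ifF ?mulr0 //; apply/negbTE; rewrite subr_eq0.
  apply/negP => /eqP; move=> [] /eqP hh; apply: hi; apply: val_inj => /=; exact/eqP.
have e2 : bm_inner g (fun _ => 0) = 0.
  rewrite /bm_inner (_ : (fun x => _) = cst 0%E) ?integral0 //.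
  by apply/funext => x /=; rewrite mulr0.
rewrite -e1 -[X in _ --> X]e2; apply: key.
- by move=> N; rewrite /in_rw rw_normsq_delta ltry.
- by split; [exact: measurable_cst | rewrite hbm0 ltry].
exists (fun _ _ => 0); split; first by move=> M; exact: smooth0.
split.
  rewrite (_ : (fun M => _) = cst 0); first exact: cvg_cst.
  apply/funext => M; rewrite /bm_norm.
  rewrite (_ : (_ \- _) = (fun _ : R => 0)) ?hbm0 ?sqrtr0 //.
  by apply/funext => x /=; rewrite subr0.
rewrite (_ : (fun M => _) = cst 0%E); first exact: cvg_cst.
apply/funext => M /=.
have e3 : forall N, rw_norm N (Phi N (fun=> 0) \- @delta0 R) = Num.sqrt ((N%:R)^-1).
  move=> N; rewrite /rw_norm.
  rewrite (_ : rw_normsq N _ = rw_normsq N (fun k => @delta0 R k)) ?rw_normsq_delta //.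
  by rewrite -rw_normsq_delta /rw_normsq; apply: eq_esum => k _ /=; rewrite /Phi sub0r sqrrN.
have -> : (fun N : nat => (rw_norm N (Phi N (fun=> 0) \- @delta0 R))%:E) =
  (fun N : nat => (Num.sqrt ((N%:R)^-1 : R))%:E) by apply/funext => K; rewrite e3.
have hc : (fun N : nat => (Num.sqrt ((N%:R)^-1 : R))%:E) @ \oo --> 0%E.
  apply: cvg_EFin; first exact: nearW.
  rewrite -sqrtr0; apply: (continuous_cvg _ (@sqrt_continuous R 0)).
  rewrite -cvg_shiftS; exact: cvg_harmonic.
rewrite is_cvg_limn_esupE; [exact: cvg_lim | exact: cvgP hc].
Qed.
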